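(* Let $f,g,h$ be smooth real functions of one variable with $f\neq 0$, $g\neq 0$, $g'\neq 0$. Then the equation $$u_t-f(u)u_x-g(u)u_{xx}+h(u)u_x^2=0$$ is quasi self-adjoint with the substitution $$\phi(u)=M\exp\left(-\int\frac{g'(u)+h(u)}{g(u)}\,du\right),$$ where $M\neq 0$ is a constant.
   Context: For a differential equation $\mathfrak{F}[u]=0$ in independent variables $t,x$ and dependent variable $u$, introduce a new dependent variable $\nu=\nu(t,x)$. The formal Lagrangian is $\mathfrak{L}=\nu\mathfrak{F}$ and the adjoint is $\mathfrak{F}^*=\frac{\delta\mathfrak{L}}{\delta u}$, where $\frac{\delta}{\delta u}=\frac{\partial}{\partial u}-D_t\frac{\partial}{\partial u_t}-D_x\frac{\partial}{\partial u_x}+D_x^2\frac{\partial}{\partial u_{xx}}$ and $D_t,D_x$ are total derivatives. The equation is quasi self-adjoint if there is a substitution $\nu=\phi(u)\neq 0$ (derivatives of $\nu$ replaced by total derivatives of $\phi(u)$) such that $\mathfrak{F}^*|_{\nu=\phi(u)}=\lambda\mathfrak{F}$ for some coefficient $\lambda=\lambda(t,x,u,\dots)$. *)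

(* Defs.v *)
From Stdlib Require Import Reals List.
From Coquelicot Require Import Coquelicot.
Open Scope R_scope.

Definition field2 := R -> R -> R.

(* A (second-order) jet function: E(t, x, u, u_t, u_x, u_xx). *)
Definition jet2 := R -> R -> R -> R -> R -> R -> R.

Definition pt (v : field2) : field2 := fun t x => Derive (fun s => v s x) t.
Definition px (v : field2) : field2 := fun t x => Derive (fun y => v t y) x.

Definition prol (E : jet2) (u : field2) : field2 :=
  fun t x => E t x (u t x) (pt u t x) (px u t x) (px (px u) t x).

Definition dJ_u (E : jet2) : jet2 :=
  fun t x u ut ux uxx => Derive (fun v => E t x v ut ux uxx) u.
Definition dJ_ut (E : jet2) : jet2 :=
  fun t x u ut ux uxx => Derive (fun v => E t x u v ux uxx) ut.
Definition dJ_ux (E : jet2) : jet2 :=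
  fun t x u ut ux uxx => Derive (fun v => E t x u ut v uxx) ux.
Definition dJ_uxx (E : jet2) : jet2 :=
  fun t x u ut ux uxx => Derive (fun v => E t x u ut ux v) uxx.

(* Formal Lagrangian  L = nu * F, with nu a new dependent variable
   (given here as the value of nu as an extra parameter). *)
Definition formal_lagrangian (F : jet2) (nu : R) : jet2 :=
  fun t x u ut ux uxx => nu * F t x u ut ux uxx.

Definition prolL (G : R -> jet2) (u nu : field2) : field2 :=
  fun t x => G (nu t x) t x (u t x) (pt u t x) (px u t x) (px (px u) t x).

(* The adjoint F^* = delta L / delta u, total derivatives being computed as
   actual derivatives along the fields u(t,x), nu(t,x). *)
Definition adjoint (F : jet2) (u nu : field2) : field2 :=
  fun t x =>
    prolL (fun n => dJ_u (formal_lagrangian F n)) u nu t x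
    - pt (prolL (fun n => dJ_ut (formal_lagrangian F n)) u nu) t x
    - px (prolL (fun n => dJ_ux (formal_lagrangian F n)) u nu) t x
    + px (px (prolL (fun n => dJ_uxx (formal_lagrangian F n)) u nu)) t x.

Fixpoint iter_partial (w : list bool) (v : field2) : field2 :=
  match w with
  | nil => v
  | b :: w' => (if b then pt else px) (iter_partial w' v)
  end.

Definition smooth2 (u : field2) : Prop :=
  forall (w : list bool) (t x : R),
    ex_derive (fun s => iter_partial w u s x) t /\
    ex_derive (fun y => iter_partial w u t y) x /\
    continuous (fun p : R * R => iter_partial w u (fst p) (snd p)) (t, x).

Definition smooth1 (f : R -> R) : Prop :=
  forall (n : nat) (y : R), ex_derive (Derive_n f n) y.

Definition quasi_self_adjoint_with (F : jet2) (phi : R -> R) : Prop :=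
  (forall y, phi y <> 0) /\
  exists lambda : jet2,
    forall u : field2, smooth2 u ->
      forall t x,
        adjoint F u (fun t' x' => phi (u t' x')) t x
        = prol lambda u t x * prol F u t x.

Definition eqF (f g h : R -> R) : jet2 :=
  fun _ _ u ut ux uxx => ut - f u * ux - g u * uxx + h u * ux ^ 2.

(* Main.v *)
Require Import Defs.
From Stdlib Require Import Reals List.
From Coquelicot Require Import Coquelicot.
Open Scope R_scope.

Section S.
Variables (f g h : R -> R) (M : R) (A : R -> R).
Hypothesis Hf : smooth1 f.
Hypothesis Hg : smooth1 g.
Hypothesis Hh : smooth1 h.
Hypothesis Hg0 : forall y, g y <> 0.
Hypothesis HA : forall y, is_derive A y ((Derive g y + h y) / g y).

Lemma exf y : ex_derive f y. Proof. exact (Hf 0%nat y). Qed.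
Lemma exg y : ex_derive g y. Proof. exact (Hg 0%nat y). Qed.
Lemma exh y : ex_derive h y. Proof. exact (Hh 0%nat y). Qed.
Lemma exA y : ex_derive A y. Proof. eexists; apply HA. Qed.
Lemma DA y : Derive A y = (Derive g y + h y) / g y.
Proof. apply is_derive_unique, HA. Qed.


Lemma T1 u t x :
  prolL (fun n => dJ_u (formal_lagrangian (eqF f g h) n)) u (fun t' x' => M * exp (- A (u t' x'))) t x =
  M * exp (- A (u t x)) * (- Derive f (u t x) * px u t x - Derive g (u t x) * px (px u) t x
     + Derive h (u t x) * (px u t x)^2).
Proof.
  unfold prolL, dJ_u, formal_lagrangian, eqF.
  apply is_derive_unique. auto_derive.
  - repeat split; auto using exf, exg, exh.
  - change (Derive (fun x => f x)) with (Derive f).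
    change (Derive (fun x => g x)) with (Derive g).
    change (Derive (fun x => h x)) with (Derive h).
    ring.
Qed.


Ltac fixD := change (Derive (fun x => f x)) with (Derive f) in *;
    change (Derive (fun x => g x)) with (Derive g) in *;
    change (Derive (fun x => h x)) with (Derive h) in *;
    change (Derive (fun x => A x)) with (Derive A) in *.

Lemma T2 u t x : ex_derive (fun s => u s x) t ->
  pt (prolL (fun n => dJ_ut (formal_lagrangian (eqF f g h) n)) u (fun t' x' => M * exp (- A (u t' x')))) t x =
  (- M * exp (- A (u t x)) * ((Derive g (u t x) + h (u t x)) / g (u t x))) * pt u t x.
Proof.
  intro Hu. unfold pt.
  transitivity (Derive (fun s => M * exp (- A (u s x))) t).
  { apply Derive_ext; intro s. unfold prolL, dJ_ut, formal_lagrangian, eqF.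
    apply is_derive_unique. auto_derive; [auto | ring]. }
  assert (Hk: is_derive (fun v => M * exp (- A v)) (u t x)
    (M * (exp (- A (u t x)) * - ((Derive g (u t x) + h (u t x)) / g (u t x))))).
  { auto_derive. apply exA. fixD. rewrite DA. ring. }
  pose proof (is_derive_comp _ (fun s => u s x) t _ _ Hk (Derive_correct _ _ Hu)) as H.
  apply is_derive_unique in H. simpl in H. rewrite H. unfold scal; simpl; unfold mult; simpl. ring.
Qed.

Lemma T3 u t x : ex_derive (fun y => u t y) x -> ex_derive (fun y => px u t y) x ->
  px (prolL (fun n => dJ_ux (formal_lagrangian (eqF f g h) n)) u (fun t' x' => M * exp (- A (u t' x')))) t x =
  (- M * exp (- A (u t x)) * ((Derive g (u t x) + h (u t x)) / g (u t x))) * px u t x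
    * (- f (u t x) + 2 * h (u t x) * px u t x)
  + M * exp (- A (u t x)) * (- Derive f (u t x) * px u t x
    + 2 * (Derive h (u t x) * px u t x * px u t x + h (u t x) * px (px u) t x)).
Proof.
  intros Hu Hu'. unfold px at 1.
  transitivity (Derive (fun y => M * exp (- A (u t y)) * (- f (u t y) + 2 * h (u t y) * px u t y)) x).
  { apply Derive_ext; intro s. unfold prolL, dJ_ux, formal_lagrangian, eqF.
    apply is_derive_unique. auto_derive; [auto | ring]. }
  apply is_derive_unique. auto_derive.
  - repeat split; auto using exA, exf, exh.
  - fixD. rewrite DA. unfold px. ring.
Qed.


Lemma T4 u t x : (forall y, ex_derive (fun y => u t y) y) -> ex_derive (fun y => px u t y) x ->
  px (px (prolL (fun n => dJ_uxx (formal_lagrangian (eqF f g h) n)) u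
     (fun t' x' => M * exp (- A (u t' x'))))) t x =
  (- M * exp (- A (u t x)) * ((Derive g (u t x) + h (u t x)) / g (u t x))) * px u t x
    * h (u t x) * px u t x
  + M * exp (- A (u t x)) * Derive h (u t x) * px u t x * px u t x
  + M * exp (- A (u t x)) * h (u t x) * px (px u) t x.
Proof.
  intros Hu Hu'.
  assert (Ha : forall y, px (prolL (fun n => dJ_uxx (formal_lagrangian (eqF f g h) n)) u
     (fun t' x' => M * exp (- A (u t' x')))) t y = M * exp (- A (u t y)) * h (u t y) * px u t y).
  { intro y. unfold px at 1.
    transitivity (Derive (fun z => M * exp (- A (u t z)) * (- g (u t z))) y).
    { apply Derive_ext; intro s. unfold prolL, dJ_uxx, formal_lagrangian, eqF.
      apply is_derive_unique. auto_derive; [auto | ring]. }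
    apply is_derive_unique. auto_derive.
    - repeat split; auto using exA, exg.
    - fixD. rewrite DA. unfold px. field. apply Hg0. }
  unfold px at 1.
  transitivity (Derive (fun y => M * exp (- A (u t y)) * h (u t y) * px u t y) x).
  { apply Derive_ext. exact Ha. }
  apply is_derive_unique. auto_derive.
  - repeat split; auto using exA, exh.
  - fixD. rewrite DA. unfold px. ring.
Qed.

End S.

Theorem corollary1 (f g h : R -> R) (M : R) (A : R -> R) :
  smooth1 f -> smooth1 g -> smooth1 h ->
  f <> (fun _ => 0) ->
  (forall y, g y <> 0) ->
  Derive g <> (fun _ => 0) ->
  M <> 0 ->
  (forall y, is_derive A y ((Derive g y + h y) / g y)) ->
  quasi_self_adjoint_with (eqF f g h) (fun y => M * exp (- A y)).
Proof.
  intros Hf Hg Hh _ Hg0 _ HM HA. split.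
  - intro y. apply Rmult_integral_contrapositive_currified; auto.
    apply Rgt_not_eq, exp_pos.
  - exists (fun _ _ v _ _ _ => M * exp (- A v) * ((Derive g v + h v) / g v)).
    intros u Hu t x.
    assert (H0 := Hu nil t x). assert (H1 := Hu (false :: nil) t x). simpl in H0, H1.
    destruct H0 as [Ht [Hx _]]. destruct H1 as [_ [Hxx _]].
    assert (Hxa : forall y, ex_derive (fun y => u t y) y) by (intro y; apply (Hu nil t y)).
    unfold adjoint.
    rewrite (T1 f g h M A Hf Hg Hh), (T2 f g h M A HA u t x Ht),
      (T3 f g h M A Hf Hh HA u t x Hx Hxx), (T4 f g h M A Hg Hh Hg0 HA u t x Hxa Hxx).
    unfold prol, eqF. field. apply Hg0.
Qed.
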